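(* Let $A\in\mathbb{R}^{n\times n}$, $B_i\in\mathbb{R}^{n\times p_i}$, $C_i\in\mathbb{R}^{q_i\times n}$, $i\in\{1,\dots,m\}$, define a jointly controllable and jointly observable $m$-channel linear system, let the neighbor graph $\mathbb{N}$ on $\{1,\dots,m\}$ be strongly connected, and let $F_i\in\mathbb{R}^{p_i\times n}$ be arbitrary. Let $b_i$ be the $i$th unit vector of $\mathbb{R}^m$ and define $\tilde A = I_{m}\otimes\big(A+\sum_{j=1}^m B_jF_j\big) - Q$, where $Q$ is the $nm\times nm$ block matrix whose $(i,j)$th $n\times n$ block is $B_jF_j$; $\tilde B_i = b_i\otimes I_n$; $\hat C_i = C_i\tilde B_i'$; $\tilde C_i = \mathrm{column}\{C_{ij^i_1},\dots,C_{ij^i_{m_i}}\}$ where $\{j^i_1,\dots,j^i_{m_i}\}=\mathcal{N}_i$ and $C_{ij}=(b_i'-b_j')\otimes I_n$. Then the $m$-channel linear system $$\dot\epsilon = \tilde A\epsilon + \sum_{j=1}^m\tilde B_j\tilde v_j,\qquad \tilde y_i = \begin{bmatrix}\hat C_i\\ \tilde C_i\end{bmatrix}\epsilon,\quad i\in\{1,\dots,m\},$$ is jointly controllable and jointly observable.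
   Context: An $m$-channel system $\{A,B_i,C_i;m\}$ is jointly controllable if $(A,[B_1\ \cdots\ B_m])$ is controllable and jointly observable if $(\mathrm{column}\{C_1,\dots,C_m\},A)$ is observable. The neighbor graph has an arc $j\to i$ iff $j$ is a neighbor of $i$; $\mathcal{N}_i$ is the set of neighbors of $i$ including $i$. $'$ denotes transpose and $\otimes$ the Kronecker product. *)

(* Defs.v *)
From HB Require Import structures.
From mathcomp Require Import all_boot all_order all_algebra.
From mathcomp Require Import mxtens.
From mathcomp Require Import reals.
Set Implicit Arguments. Unset Strict Implicit. Unset Printing Implicit Defensive.
Import Order.TTheory GRing.Theory Num.Theory.
Local Open Scope ring_scope.

Section Defs.
Variable R : fieldType.

Definition controllable (n p : nat) (A : 'M[R]_n) (B : 'M[R]_(n, p)) : Prop :=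
  \rank (\mxrow_(k < n) (A ^+ k *m B)) = n.

Definition observable (n q : nat) (C : 'M[R]_(q, n)) (A : 'M[R]_n) : Prop :=
  \rank (\mxcol_(k < n) (C *m A ^+ k)) = n.

Definition jointly_controllable (n m : nat) (p : 'I_m -> nat)
  (A : 'M[R]_n) (B : forall i : 'I_m, 'M[R]_(n, p i)) : Prop :=
  controllable A (\mxrow_(i < m) B i).

Definition jointly_observable (n m : nat) (q : 'I_m -> nat)
  (C : forall i : 'I_m, 'M[R]_(q i, n)) (A : 'M[R]_n) : Prop :=
  observable (\mxcol_(i < m) C i) A.

Definition unitv (m : nat) (i : 'I_m) : 'cV[R]_m := delta_mx i 0.

Definition Btil (m n : nat) (i : 'I_m) : 'M[R]_(m * n, n) :=
  castmx (erefl (m * n), mul1n n) (unitv i *t (1%:M : 'M[R]_n)).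

Definition Cij (m n : nat) (i j : 'I_m) : 'M[R]_(n, m * n) :=
  castmx (mul1n n, erefl (m * n)) (((unitv i)^T - (unitv j)^T) *t (1%:M : 'M[R]_n)).

Definition Qmx (n m : nat) (p : 'I_m -> nat)
  (B : forall i : 'I_m, 'M[R]_(n, p i)) (F : forall i : 'I_m, 'M[R]_(p i, n))
  : 'M[R]_(m * n) :=
  \sum_(i < m) \sum_(j < m) (delta_mx i j *t (B j *m F j)).

Definition Atil (n m : nat) (p : 'I_m -> nat) (A : 'M[R]_n)
  (B : forall i : 'I_m, 'M[R]_(n, p i)) (F : forall i : 'I_m, 'M[R]_(p i, n))
  : 'M[R]_(m * n) :=
  ((1%:M : 'M[R]_m) *t (A + \sum_(j < m) B j *m F j)) - Qmx B F.

End Defs.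

(* Neighbor graph: nbr i j  <=> j is a neighbor of i, i.e. arc j -> i. *)
Definition nbr_arc (m : nat) (nbr : rel 'I_m) : rel 'I_m := fun x y => nbr y x.

Definition strongly_connected (m : nat) (nbr : rel 'I_m) : Prop :=
  forall i j : 'I_m, connect (nbr_arc nbr) i j.

Definition Nset (m : nat) (nbr : rel 'I_m) (i : 'I_m) : {set 'I_m} :=
  i |: [set j | nbr i j].

Section Defs2.
Variable R : fieldType.

Definition Chat (n m : nat) (q : 'I_m -> nat) (C : forall i : 'I_m, 'M[R]_(q i, n))
  (i : 'I_m) : 'M[R]_(q i, m * n) := C i *m (@Btil R m n i)^T.

Definition Ctil (n m : nat) (nbr : rel 'I_m) (i : 'I_m)
  : 'M[R]_(\sum_(k < #|Nset nbr i|) n, m * n) :=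
  \mxcol_(k < #|Nset nbr i|) @Cij R m n i (enum_val k).

Definition Ynew (n m : nat) (q : 'I_m -> nat) (C : forall i : 'I_m, 'M[R]_(q i, n))
  (nbr : rel 'I_m) (i : 'I_m)
  : 'M[R]_(q i + \sum_(k < #|Nset nbr i|) n, m * n) :=
  col_mx (Chat C i) (@Ctil n m nbr i).

End Defs2.

(* Main.v *)
Require Import Defs.
From HB Require Import structures.
From mathcomp Require Import all_boot all_order all_algebra.
From mathcomp Require Import mxtens.
From mathcomp Require Import reals.
Set Implicit Arguments. Unset Strict Implicit. Unset Printing Implicit Defensive.
Import Order.TTheory GRing.Theory Num.Theory.
Local Open Scope ring_scope.

Section Aux.
Variable R : fieldType.

Lemma rank_ker_col r c (M : 'M[R]_(r, c)) :
  (forall v : 'cV_c, M *m v = 0 -> v = 0) -> \rank M = c.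
Proof.
move=> H.
have K0 : cokermx M = 0.
  apply/matrixP => i k.
  have := H (col k (cokermx M)).
  rewrite colE mulmxA mulmx_coker mul0mx.
  move=> /(_ erefl) /matrixP /(_ i 0).
  move=> HH; transitivity (col k (cokermx M) i 0); first by rewrite [RHS]mxE. by rewrite colE HH !mxE.
have := mxrank_coker M; rewrite K0 mxrank0 => /eqP; rewrite eq_sym subn_eq0 => h.
by apply/eqP; rewrite eqn_leq rank_leq_col h.
Qed.

Lemma rank_ker_row r c (M : 'M[R]_(r, c)) :
  (forall u : 'rV_r, u *m M = 0 -> u = 0) -> \rank M = r.
Proof.
move=> H; rewrite -mxrank_tr; apply: rank_ker_col => v Hv.
have : v^T *m M = 0 by rewrite -(trmxK M) -trmx_mul Hv trmx0.
by move/H => /(congr1 trmx); rewrite trmxK trmx0.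
Qed.

Lemma rank_col_ker r c (M : 'M[R]_(r, c)) (v : 'cV_c) :
  \rank M = c -> M *m v = 0 -> v = 0.
Proof.
move=> /eqP Hr Hv; have /row_fullP [B HB] : row_full M by [].
by rewrite -[v]mul1mx -HB -mulmxA Hv mulmx0.
Qed.

Lemma sum_delta (I : finType) (j : I) (F : I -> R) :
  \sum_i ((i == j)%:R * F i) = F j.
Proof.
rewrite (bigD1 j) //= eqxx mul1r big1 ?addr0 // => i /negPf ->; by rewrite mul0r.
Qed.

Lemma sum_deltaZ (I : finType) (j : I) a b (F : I -> 'M[R]_(a, b)) :
  \sum_i ((i == j)%:R *: F i) = F j.
Proof.
rewrite (bigD1 j) //= eqxx scale1r big1 ?addr0 // => i /negPf ->; by rewrite scale0r.
Qed.

Variables (m n : nat).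

Definition blk (w : 'cV[R]_(m * n)) (j : 'I_m) : 'cV[R]_n :=
  \col_c w (mxtens_index (j, c)) 0.

Lemma sum_tens (F : 'I_(m * n) -> R) :
  \sum_r F r = \sum_j \sum_a F (mxtens_index (j, a)).
Proof.
rewrite pair_big /=.
rewrite (eq_bigr (fun p => F (mxtens_index p))); last by case.
apply: reindex.
by exists (@mxtens_unindex m n) => x _; rewrite (mxtens_indexK, mxtens_unindexK).
Qed.

Lemma blk_eq0 (w : 'cV[R]_(m * n)) : (forall j, blk w j = 0) -> w = 0.
Proof.
move=> H; apply/matrixP => r z; case: (mxtens_indexP r) => j a.
rewrite (ord1 z); have := H j; move/matrixP/(_ a 0); rewrite !mxE => ->.
by [].
Qed.

Lemma blkB (w1 w2 : 'cV[R]_(m * n)) j : blk (w1 - w2) j = blk w1 j - blk w2 j.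
Proof. by apply/matrixP => a b; rewrite !mxE. Qed.

Lemma blk_sum (X : 'I_m -> 'cV[R]_(m * n)) j :
  blk (\sum_i X i) j = \sum_i blk (X i) j.
Proof. by apply/matrixP => a b; rewrite !mxE !summxE; apply: eq_bigr => i _; rewrite !mxE. Qed.

Lemma Btil_E j i a b :
  @Btil R m n j (mxtens_index (i, a)) b = (i == j)%:R * (a == b)%:R.
Proof.
rewrite /Btil castmxE /= cast_ord_id.
rewrite (_ : cast_ord _ b = @mxtens_index 1 n (ord0, b)); last first.
  by apply: val_inj => /=; rewrite mul0n add0n.
by rewrite tensmxE /unitv !mxE eqxx andbT.
Qed.

Lemma BtilT_mul j (w : 'cV[R]_(m * n)) : (@Btil R m n j)^T *m w = blk w j.
Proof.
apply/matrixP => c z; rewrite (ord1 z) !mxE sum_tens.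
under eq_bigr do under eq_bigr do rewrite mxE Btil_E -mulrA.
rewrite (eq_bigr (fun i => (i == j)%:R * \sum_a ((a == c)%:R * w (mxtens_index (i, a)) 0))).
  by rewrite sum_delta sum_delta.
by move=> i _; rewrite mulr_sumr.
Qed.


Lemma Cij_eq i j : @Cij R m n i j = (@Btil R m n i)^T - (@Btil R m n j)^T.
Proof.
apply/matrixP => c r; case: (mxtens_indexP r) => k a.
rewrite /Cij castmxE /= cast_ord_id.
rewrite (_ : cast_ord _ c = @mxtens_index 1 n (ord0, c)); last first.
  by apply: val_inj => /=; rewrite mul0n add0n.
rewrite tensmxE !mxE !Btil_E !andbT [a == c]eq_sym.
by rewrite mulrBl.
Qed.

Lemma Cij_mul i j (w : 'cV[R]_(m * n)) : @Cij R m n i j *m w = blk w i - blk w j.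
Proof. by rewrite Cij_eq mulmxBl !BtilT_mul. Qed.

Lemma Chat_mul q (C : forall i : 'I_m, 'M[R]_(q i, n)) i (w : 'cV[R]_(m * n)) :
  Chat C i *m w = C i *m blk w i.
Proof. by rewrite /Chat -mulmxA BtilT_mul. Qed.

Lemma blk_tens (P : 'M[R]_m) (M : 'M[R]_n) (w : 'cV[R]_(m * n)) i :
  blk ((P *t M) *m w) i = \sum_k P i k *: (M *m blk w k).
Proof.
apply/matrixP => c z; rewrite !mxE summxE sum_tens.
apply: eq_bigr => k _; rewrite !mxE mulr_sumr; apply: eq_bigr => a _.
by rewrite !mxE !mxtens_indexK /= mulrA.
Qed.

Lemma blk_tens_const (P : 'M[R]_m) (M : 'M[R]_n) (w : 'cV[R]_(m * n)) x i :
  (forall k, blk w k = x) ->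
  blk ((P *t M) *m w) i = (\sum_k P i k) *: (M *m x).
Proof.
move=> H; rewrite blk_tens scaler_suml; apply: eq_bigr => k _; by rewrite H.
Qed.


Lemma blk_mulsum (X : 'I_m -> 'M[R]_(m * n)) (w : 'cV[R]_(m * n)) j :
  blk ((\sum_i X i) *m w) j = \sum_i blk (X i *m w) j.
Proof. by rewrite mulmx_suml blk_sum. Qed.

Lemma Atil_const (p : 'I_m -> nat) (A : 'M[R]_n)
  (B : forall i : 'I_m, 'M[R]_(n, p i)) (F : forall i : 'I_m, 'M[R]_(p i, n))
  (w : 'cV[R]_(m * n)) x :
  (forall k, blk w k = x) -> forall i, blk (Atil A B F *m w) i = A *m x.
Proof.
move=> H i; rewrite /Atil /Qmx mulmxBl blkB blk_mulsum.
rewrite (blk_tens_const _ _ _ H).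
under [X in _ - X]eq_bigr => i0 _ do rewrite blk_mulsum.
under [X in _ - X]eq_bigr => i0 _ do under eq_bigr => j0 _ do rewrite (blk_tens_const _ _ _ H).
have -> : \sum_k (1%:M : 'M[R]_m) i k = 1.
  by under eq_bigr do rewrite mxE eq_sym; rewrite (eq_bigr (fun k => (k == i)%:R * 1)) ?sum_delta // => k _; rewrite mulr1.
rewrite scale1r.
have E : forall i' j' : 'I_m, \sum_k (delta_mx i' j' : 'M[R]_m) i k = (i' == i)%:R.
  move=> i' j'; under eq_bigr do rewrite mxE.
  rewrite [i == i']eq_sym; case: (i' == i) => /=.
    by rewrite (eq_bigr (fun k => (k == j')%:R * 1)) ?sum_delta // => k _; rewrite mulr1.
  by rewrite big1.
under [X in _ - X]eq_bigr => i0 _ do under eq_bigr => j0 _ do rewrite E.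
under [X in _ - X]eq_bigr => i0 _ do rewrite -scaler_sumr.
rewrite sum_deltaZ mulmxDl mulmx_suml addrK.
done.
Qed.

Lemma Atil_pow (p : 'I_m -> nat) (A : 'M[R]_n)
  (B : forall i : 'I_m, 'M[R]_(n, p i)) (F : forall i : 'I_m, 'M[R]_(p i, n))
  (w : 'cV[R]_(m * n)) x k :
  (forall j, blk w j = x) -> forall i, blk (Atil A B F ^+ k *m w) i = A ^+ k *m x.
Proof.
move=> H; elim: k => [|k IH] i.
  by rewrite !expr0 !mul1mx H.
rewrite !exprS -!mulmxE -!mulmxA.
by rewrite (Atil_const _ _ _ IH).
Qed.

End Aux.

Theorem lemma1 (R : realType) (n m : nat) (p q : 'I_m -> nat)
  (A : 'M[R]_n)
  (B : forall i : 'I_m, 'M[R]_(n, p i))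
  (C : forall i : 'I_m, 'M[R]_(q i, n))
  (nbr : rel 'I_m)
  (F : forall i : 'I_m, 'M[R]_(p i, n)) :
  jointly_controllable A B ->
  jointly_observable C A ->
  strongly_connected nbr ->
  jointly_controllable (Atil A B F) (fun j : 'I_m => @Btil R m n j) /\
  jointly_observable (fun i : 'I_m => Ynew C nbr i) (Atil A B F).
Proof.
move=> _ HO Hsc.
have [/eqP mn0 | mnp] := posnP (m * n).
  have triv : forall (T : 'I_(m * n) -> Prop) r, T r.
    move=> T r; have hp : (0 < m * n)%N := leq_ltn_trans (leq0n _) (ltn_ord r).
    by rewrite lt0n mn0 in hp.
  split; rewrite /jointly_controllable /jointly_observable /controllable /observable.
    apply: rank_ker_row => u _; apply/matrixP => a b; case: (triv (fun _ => False) b).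
  apply: rank_ker_col => u _; apply/matrixP => a b; case: (triv (fun _ => False) a).
pose k0 : 'I_(m * n) := Ordinal mnp.
split.
  rewrite /jointly_controllable /controllable.
  apply: rank_ker_row => u Hu.
  rewrite mul_mxrow in Hu.
  have := congr1 (fun X => submxrow X k0) Hu; rewrite mxrowK submxrow0 expr0 mul1mx mul_mxrow => H0.
  have Hj : forall j, (@Btil R m n j)^T *m u^T = 0.
    move=> j; have := congr1 (fun X => submxrow X j) H0; rewrite mxrowK submxrow0 => h.
    by rewrite -trmx_mul h trmx0.
  have : u^T = 0 by apply: blk_eq0 => j; rewrite -BtilT_mul Hj.
  by move/(congr1 trmx); rewrite trmxK trmx0.
rewrite /jointly_observable /observable.
apply: rank_ker_col => v Hv.
rewrite mxcol_mul in Hv.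
have Hk : forall (k : 'I_(m * n)) i, Ynew C nbr i *m (Atil A B F ^+ k *m v) = 0.
  move=> k i; have := congr1 (fun X => submxcol X k) Hv; rewrite mxcolK submxcol0 !mxcol_mul => h.
  have := congr1 (fun X => submxcol X i) h; rewrite mxcolK submxcol0 => h2.
  by rewrite mulmxA.
have [m0 n0] : (0 < m)%N /\ (0 < n)%N by apply/andP; rewrite -muln_gt0.
pose i0 : 'I_m := Ordinal m0.
have Hnb : forall i j, nbr i j -> blk v i = blk v j.
  move=> i j hij; have := Hk k0 i.
  rewrite expr0 mul1mx /Ynew mul_col_mx => /eqP; rewrite col_mx_eq0 => /andP [_ /eqP hC].
  rewrite /Ctil mxcol_mul in hC.
  have hj : j \in Nset nbr i by rewrite /Nset !inE hij orbT.
  have := congr1 (fun X => submxcol X (enum_rank_in hj j)) hC.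
  rewrite mxcolK submxcol0 (enum_rankK_in hj hj) Cij_mul => /eqP; rewrite subr_eq0 => /eqP.
  done.
have Hall : forall j, blk v j = blk v i0.
  move=> j; have /connectP [s hs ->] := Hsc j i0.
  elim: s j hs => [|y s IH] j //= /andP [hjy hs].
  by rewrite -(IH y hs) (Hnb _ _ hjy).
set x := blk v i0 in Hall.
have Hp : forall k i, blk (Atil A B F ^+ k *m v) i = A ^+ k *m x.
  by move=> k i; apply: Atil_pow.
have Hx : x = 0.
  apply: (rank_col_ker HO).
  rewrite mxcol_mul (eq_mxcol (B_ := fun _ => 0)) ?mxcol0 // => k.
  rewrite !mxcol_mul (eq_mxcol (B_ := fun _ => 0)) ?mxcol0 // => i.
  pose k' : 'I_(m * n) := widen_ord (leq_pmull n m0) k.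
  have := Hk k' i; rewrite /Ynew mul_col_mx => /eqP; rewrite col_mx_eq0 => /andP [/eqP h _].
  rewrite Chat_mul Hp in h.
  by rewrite -mulmxA; exact: h.
by apply: blk_eq0 => j; rewrite Hall Hx.
Qed.
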